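(* Let $G=(V,E)$ be an undirected graph and $\tau$ a positive integer. The polytope $$P_1^\tau(G)=\{x\in\mathbb{R}^{E^+\cup E^-}: x_{e^+}\ge1,\ x_{e^-}\ge1,\ x_{e^+}+x_{e^-}=\tau\ \forall e\in E,\ x(\delta^+_{\vec G}(U))\ge\tau\ \forall\,\emptyset\neq U\subsetneq V\}$$ is integral (every vertex is an integral vector).
   Context: Graphs are finite and loopless; parallel edges allowed. $\vec G=(V,E^+\cup E^-)$ is obtained from $G$ by replacing each edge $e=\{u,v\}$ by arcs $e^+=(u,v)$ and $e^-=(v,u)$ (choice arbitrary); $\delta^+_{\vec G}(U)$ is the set of arcs leaving $U$ and $x(B)=\sum_{e\in B}x_e$. *)

(* Defs.v *)
From mathcomp Require Import all_boot all_order all_algebra.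
From mathcomp Require Import reals.
Set Implicit Arguments. Unset Strict Implicit. Unset Printing Implicit Defensive.
Import Order.TTheory GRing.Theory Num.Theory.
Local Open Scope ring_scope.

(* The arc set
   E^+ \cup E^- of the bidirected graph is encoded as [E * bool]:
   (e, true) = e^+ = (u, v) and (e, false) = e^- = (v, u). *)

Definition arc_tail (V E : finType) (ends : E -> V * V) (a : E * bool) : V :=
  if a.2 then (ends a.1).1 else (ends a.1).2.
Definition arc_head (V E : finType) (ends : E -> V * V) (a : E * bool) : V :=
  if a.2 then (ends a.1).2 else (ends a.1).1.

Definition out_cut (R : realType) (V E : finType) (ends : E -> V * V)
  (x : E * bool -> R) (U : {set V}) : R :=
  \sum_(a : E * bool | (arc_tail ends a \in U) && (arc_head ends a \notin U)) x a.

Definition in_P1tau (R : realType) (V E : finType) (ends : E -> V * V)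
  (tau : nat) (x : E * bool -> R) : Prop :=
  (forall e : E, 1 <= x (e, true) /\ 1 <= x (e, false)
                 /\ x (e, true) + x (e, false) = tau%:R) /\
  (forall U : {set V}, U != set0 -> U != setT -> tau%:R <= out_cut ends x U).

Definition is_vertex (R : realType) (T : Type) (P : (T -> R) -> Prop)
  (x : T -> R) : Prop :=
  P x /\ forall (y z : T -> R) (l : R), P y -> P z -> 0 < l -> l < 1 ->
    x = (fun t => l * y t + (1 - l) * z t) -> y = z.

Definition integral_vector (R : realType) (T : Type) (x : T -> R) : Prop :=
  forall t, x t \is a Num.int.

(* Main.v *)
Require Import Defs.
From mathcomp Require Import all_boot all_order all_algebra.
From mathcomp Require Import reals.
From mathcomp Require Import lra.
Import Order.TTheory GRing.Theory Num.Theory.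
Set Implicit Arguments. Unset Strict Implicit. Unset Printing Implicit Defensive.

Section Cross.
Variable V : finType.
Implicit Types S L M X Y : {set V}.

Definition cr X Y := [&& [exists v, (v \in X) && (v \in Y)],
  [exists v, (v \in X) && (v \notin Y)], [exists v, (v \notin X) && (v \in Y)] &
  [exists v, (v \notin X) && (v \notin Y)]].

Lemma crC X Y : cr X Y = cr Y X.
Proof.
rewrite /cr.
have E1 : forall (p q : V -> bool), [exists v, p v && q v] = [exists v, q v && p v].
  by move=> p q; apply: eq_existsb => v; rewrite andbC.
by rewrite (E1 (fun v => v \in X)) (E1 (fun v => v \in X) (fun v => v \notin Y))
  (E1 (fun v => v \notin X)) (E1 (fun v => v \notin X) (fun v => v \notin Y));
  case: [exists _, _]; case: [exists _, _]; case: [exists _, _]; case: [exists _, _].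
Qed.

Lemma crCr X Y : cr X (~: Y) = cr X Y.
Proof.
rewrite /cr.
have E1 : forall (p q : V -> bool), [exists v, p v && q v] = [exists v, p v && ~~ ~~ q v].
  by move=> p q; apply: eq_existsb => v; rewrite negbK.
have E2 : forall (p : V -> bool), [exists v, p v && (v \in ~: Y)] = [exists v, p v && (v \notin Y)].
  by move=> p; apply: eq_existsb => v; rewrite in_setC.
rewrite !E2.
have E3 : forall (p : V -> bool), [exists v, p v && (v \notin ~: Y)] = [exists v, p v && (v \in Y)].
  by move=> p; apply: eq_existsb => v; rewrite in_setC negbK.
rewrite !E3.
by case: [exists _, _]; case: [exists _, _]; case: [exists _, _]; case: [exists _, _].
Qed.

Lemma crCl X Y : cr (~: X) Y = cr X Y.
Proof. by rewrite crC crCr crC. Qed.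

Lemma crxx X : cr X X = false.
Proof.
apply/negbTE; rewrite /cr; apply/negP => /and4P [_ /existsP [v /andP [h1 h2]] _ _].
by rewrite h1 in h2.
Qed.

Lemma crI_sub S L : cr (S :&: L) L = false.
Proof.
apply/negbTE; rewrite /cr; apply/negP => /and4P [_ /existsP [v /andP [h1 h2]] _ _].
by rewrite in_setI in h1; case/andP: h1 => _ h1; rewrite h1 in h2.
Qed.

Lemma crU_sub S L : cr (S :|: L) L = false.
Proof.
apply/negbTE; rewrite /cr; apply/negP => /and4P [_ _ /existsP [v /andP [h1 h2]] _].
by rewrite in_setU h2 orbT in h1.
Qed.

Lemma cr_mono_I S L M : cr S L -> ~~ cr L M -> cr (S :&: L) M -> cr S M.
Proof.
case/and4P => _ _ _ /existsP [a4 /andP [a4S a4L]].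
move=> nLM /and4P [/existsP [b1 /andP [b1SL b1M]] /existsP [b2 /andP [b2SL b2M]]
  /existsP [b3 /andP [b3SL b3M]] /existsP [b4 /andP [b4SL b4M]]].
move: b1SL b2SL b3SL b4SL; rewrite !in_setI => /andP [b1S b1L] /andP [b2S b2L] b3SL b4SL.
apply/and4P; split.
- by apply/existsP; exists b1; rewrite b1S b1M.
- by apply/existsP; exists b2; rewrite b2S b2M.
- case b3S: (b3 \in S); last by apply/existsP; exists b3; rewrite b3S b3M.
  rewrite b3S /= in b3SL.
  case a4M: (a4 \in M); first by apply/existsP; exists a4; rewrite a4S a4M.
  exfalso; move: nLM; rewrite /cr; apply/negP/negPn; apply/and4P; split.
  + by apply/existsP; exists b1; rewrite b1L b1M.
  + by apply/existsP; exists b2; rewrite b2L b2M.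
  + by apply/existsP; exists b3; rewrite b3SL b3M.
  + by apply/existsP; exists a4; rewrite a4L a4M.
- case b4S: (b4 \in S); last by apply/existsP; exists b4; rewrite b4S b4M.
  rewrite b4S /= in b4SL.
  case a4M: (a4 \in M); last by apply/existsP; exists a4; rewrite a4S a4M.
  exfalso; move: nLM; rewrite /cr; apply/negP/negPn; apply/and4P; split.
  + by apply/existsP; exists b1; rewrite b1L b1M.
  + by apply/existsP; exists b2; rewrite b2L b2M.
  + by apply/existsP; exists a4; rewrite a4L a4M.
  + by apply/existsP; exists b4; rewrite b4SL b4M.
Qed.

Lemma cr_mono_U S L M : cr S L -> ~~ cr L M -> cr (S :|: L) M -> cr S M.
Proof.
move=> h1 h2 h3.
rewrite -crCl; apply: (@cr_mono_I _ (~: L)).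
- by rewrite crCl crCr.
- by rewrite crCl.
- by rewrite -setCU crCl.
Qed.

End Cross.
Section Atoms.
Local Open Scope ring_scope.
Variable R : realType.
Variable V : finType.
Implicit Types S L M X Y : {set V}.

Definition lam X Y := ~~ [&& [exists v, (v \in X) && (v \in Y)],
  [exists v, (v \in X) && (v \notin Y)] & [exists v, (v \notin X) && (v \in Y)]].

Definition nrm (r : V) X := if r \in X then ~: X else X.

Lemma nrm_lam r L M : ~~ cr L M -> lam (nrm r L) (nrm r M).
Proof.
have -> : cr L M = cr (nrm r L) (nrm r M).
  by rewrite /nrm; case: (r \in L); case: (r \in M); rewrite ?crCl ?crCr.
have rL : r \notin nrm r L by rewrite /nrm; case: ifP => h; rewrite ?inE h.
have rM : r \notin nrm r M by rewrite /nrm; case: ifP => h; rewrite ?inE h.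
rewrite /cr /lam; apply: contra => /and3P [-> -> ->] /=.
by apply/existsP; exists r; rewrite rL rM.
Qed.

Definition atom (MM : {set {set V}}) a := [set v | [forall L in MM, (v \in L) == (a \in L)]].

Lemma atom_self (MM : {set {set V}}) a : a \in atom MM a.
Proof. by rewrite inE; apply/forall_inP => L _. Qed.

Lemma atom_eq (MM : {set {set V}}) a v : v \in atom MM a -> atom MM v = atom MM a.
Proof.
rewrite inE => /forall_inP h; apply/setP => w; rewrite !inE.
apply/forall_inP/forall_inP => h2 L HL.
- by rewrite (eqP (h2 L HL)) (eqP (h L HL)).
- by rewrite (eqP (h2 L HL)) (eqP (h L HL)).
Qed.

Lemma atom_nrm r (MM : {set {set V}}) a : atom [set nrm r L | L in MM] a = atom MM a.
Proof.
apply/setP => v; rewrite !inE; apply/forall_inP/forall_inP => h L HL.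
- have := h (nrm r L) (imset_f _ HL); rewrite /nrm; case: ifP => // _.
  by rewrite !inE; case: (v \in L); case: (a \in L).
- case/imsetP: HL => L' HL' ->; have := h L' HL'; rewrite /nrm; case: ifP => // _.
  by rewrite !inE; case: (v \in L'); case: (a \in L').
Qed.

Variable Psi : {set V} -> R.
Hypothesis Psi_mod : forall X Y, Psi X + Psi Y = Psi (X :&: Y) + Psi (X :|: Y).
Hypothesis Psi0 : Psi set0 = 0.

Lemma Psi_disj X Y : X :&: Y = set0 -> Psi (X :|: Y) = Psi X + Psi Y.
Proof. by move=> h; rewrite Psi_mod h Psi0 add0r. Qed.

Lemma Psi_D X Y : Y \subset X -> Psi (X :\: Y) = Psi X - Psi Y.
Proof.
move=> sYX; have -> : Psi X = Psi ((X :\: Y) :|: Y).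
  congr Psi; apply/setP => v; rewrite !inE; case vY: (v \in Y) => /=.
    by rewrite (subsetP sYX).
  by rewrite orbF.
rewrite (Psi_disj (X := X :\: Y) (Y := Y)) ?addrK //; apply/setP => v; rewrite !inE.
by case: (v \in Y); rewrite ?andbF.
Qed.

Lemma Psi_C X : Psi (~: X) = Psi setT - Psi X.
Proof. by rewrite -Psi_D ?subsetT // setTD. Qed.

Variable G : pred R.
Hypothesis G0 : G 0.
Hypothesis GB : forall a b, G a -> G b -> G (a - b).

Lemma atoms_G : forall n (MM : {set {set V}}), (#|MM| <= n)%N ->
  (forall A B, A \in MM -> B \in MM -> lam A B) ->
  (forall L, L \in MM -> G (Psi L)) -> G (Psi setT) -> forall a, G (Psi (atom MM a)).
Proof.
elim=> [|n IH] MM.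
  rewrite leqn0 cards_eq0 => /eqP -> _ _ GT a.
  suff -> : atom set0 a = setT by [].
  by apply/setP => v; rewrite !inE; apply/forall_inP => L; rewrite inE.
move=> cMM Hlam HG GT a.
case: (set_0Vmem MM) => [-> | [L1 L1M]].
  suff -> : atom set0 a = setT by [].
  by apply/setP => v; rewrite !inE; apply/forall_inP => L; rewrite inE.
case: (@arg_minnP _ L1 (fun L => L \in MM) (fun L => #|L|) L1M) => L0 L0M L0min.
set MM' := MM :\ L0.
have C : forall L u, L \in MM -> u \in L0 -> u \in L -> L0 \subset L.
  move=> L u LM uL0 uL.
  have := Hlam L L0 LM L0M; rewrite /lam.
  have -> : [exists v, (v \in L) && (v \in L0)] by apply/existsP; exists u; rewrite uL uL0.
  rewrite /= negb_and => /orP [].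
    rewrite negb_exists => /forallP h1.
    have sLL0 : L \subset L0 by apply/subsetP => v vL; have := h1 v; rewrite vL /= negbK.
    have := L0min L LM => cL.
    have /eqP <- : L == L0 by rewrite eqEcard sLL0 cL.
    by [].
  rewrite negb_exists => /forallP h1.
  by apply/subsetP => v vL0; have := h1 v; rewrite vL0 andbT negbK.
have C2 : forall L u w, L \in MM -> u \in L0 -> w \in L0 -> (u \in L) = (w \in L).
  move=> L u w LM uL0 wL0; apply/idP/idP => h.
  - by apply: (subsetP (C L u LM uL0 h)).
  - by apply: (subsetP (C L w LM wL0 h)).
have IH' : forall b, G (Psi (atom MM' b)).
  apply: IH.
  - by move: cMM; rewrite (cardsD1 L0 MM) L0M add1n ltnS.
  - by move=> A B; rewrite !inE => /andP [_ AM] /andP [_ BM]; apply: Hlam.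
  - by move=> L; rewrite !inE => /andP [_ LM]; apply: HG.
  - exact: GT.
case aL0: (a \in L0).
  suff -> : atom MM a = L0 by apply: HG.
  apply/setP => v; rewrite inE; apply/forall_inP/idP.
  - by move=> h; have := h L0 L0M; rewrite aL0 => /eqP.
  - by move=> vL0 L LM; rewrite (C2 L v a LM vL0 aL0).
have -> : atom MM a = atom MM' a :\: L0.
  apply/setP => v; rewrite !inE; apply/forall_inP/andP.
  - move=> h; split; first by have := h L0 L0M; rewrite aL0 => /eqP ->.
    by apply/forall_inP => L; rewrite !inE => /andP [_ LM]; apply: h.
  - move=> [vL0 /forall_inP h] L LM; case: (L =P L0) => [->|ne].
      by rewrite aL0 (negbTE vL0).
    by apply: h; rewrite !inE LM andbT; apply/eqP.
case: (boolP [exists b, (b \in L0) && (b \in atom MM' a)]).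
- case/existsP => b /andP [bL0 bA].
  have sub : L0 \subset atom MM' a.
    apply/subsetP => u uL0; move: bA; rewrite !inE => /forall_inP h.
    apply/forall_inP => L HL; rewrite -(eqP (h L HL)).
    move: HL; rewrite !inE => /andP [_ LM].
    by rewrite (C2 L u b LM uL0 bL0).
  by rewrite Psi_D //; apply: GB => //; apply: HG.
- rewrite negb_exists => /forallP h.
  suff -> : atom MM' a :\: L0 = atom MM' a by [].
  apply/setP => v; rewrite !inE; case vL0: (v \in L0) => //=.
  by have := h v; rewrite vL0 /= inE => /negbTE ->.
Qed.

Lemma union_atoms (MM : {set {set V}}) (X : {set V}) :
  (forall a v, a \in X -> v \in atom MM a -> v \in X) ->
  (forall a, Psi (atom MM a) = 0) -> Psi X = 0.
Proof.
move: {2}#|X| (leqnn #|X|) => n; elim: n X => [|n IH] X.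
  by rewrite leqn0 cards_eq0 => /eqP -> _ _.
move=> cX Hcl H0; case: (set_0Vmem X) => [-> //|[a aX]].
have sA : atom MM a \subset X by apply/subsetP => v; apply: Hcl.
have -> : X = (X :\: atom MM a) :|: atom MM a.
  apply/setP => v; rewrite in_setU in_setD; case vA: (v \in atom MM a) => /=.
    by rewrite (subsetP sA).
  by rewrite orbF.
rewrite Psi_disj; last first.
  by apply/setP => v; rewrite in_setI in_setD in_set0; case: (v \in atom MM a); rewrite ?andbF.
rewrite H0 addr0; apply: IH.
- move: cX; rewrite (cardsD1 a X) aX add1n ltnS => h.
  apply: leq_trans h; apply: subset_leq_card; apply/subsetP => v.
  rewrite in_setD in_setD1 => /andP [vA vX]; rewrite vX andbT.
  by apply: contra vA => /eqP ->; apply: atom_self.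
- move=> b v; rewrite !in_setD => /andP [bA bX] vb; rewrite (Hcl b v bX vb) andbT.
  apply: contra bA => vA.
  have e1 := atom_eq vb; have e2 := atom_eq vA.
  by rewrite -e2 e1 atom_self.
- exact: H0.
Qed.

End Atoms.
Section Uncross.
Local Open Scope ring_scope.
Variable R : realType.
Variable V : finType.
Variable TT : {set {set V}}.
Hypothesis unc : forall U W, U \in TT -> W \in TT -> cr U W ->
  (U :&: W \in TT) /\ (U :|: W \in TT).

Definition crfree (MM : {set {set V}}) := [forall S in MM, forall T in MM, ~~ cr S T].

Definition LL := [arg max_(MM > set0 | (MM \subset TT) && crfree MM) #|MM|].

Lemma LL_spec : (LL \subset TT) && crfree LL /\
  forall MM : {set {set V}}, (MM \subset TT) && crfree MM -> (#|MM| <= #|LL|)%N.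
Proof.
rewrite /LL; case: arg_maxnP => [|MM h1 h2]; last by split.
by rewrite sub0set /crfree; apply/forall_inP => S; rewrite inE.
Qed.

Lemma LL_sub : LL \subset TT.
Proof. by case: LL_spec => /andP []. Qed.

Lemma LL_free S T : S \in LL -> T \in LL -> ~~ cr S T.
Proof. by case: LL_spec => /andP [_ /forall_inP h] _ HS HT; move/forall_inP: (h S HS); apply. Qed.

Lemma LL_max S : S \in TT -> (forall L, L \in LL -> ~~ cr S L) -> S \in LL.
Proof.
move=> ST h; apply/negPn/negP => nS.
case: LL_spec => _ /(_ (S |: LL)).
have -> : (S |: LL \subset TT) && crfree (S |: LL).
  apply/andP; split.
    by apply/subsetP => X; rewrite in_setU1 => /orP [/eqP -> //|]; apply: (subsetP LL_sub).
  apply/forall_inP => A; rewrite in_setU1 => HA; apply/forall_inP => B; rewrite in_setU1 => HB.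
  case/orP: HA => [/eqP ->|HA]; case/orP: HB => [/eqP ->|HB].
  - by rewrite crxx.
  - by apply: h.
  - by rewrite crC; apply: h.
  - by apply: LL_free.
by rewrite cardsU1 nS add1n ltnn => /(_ isT).
Qed.

Variable Psi : {set V} -> R.
Hypothesis Psi_mod : forall X Y, Psi X + Psi Y = Psi (X :&: Y) + Psi (X :|: Y).
Variable G : pred R.
Hypothesis G0 : G 0.
Hypothesis GB : forall a b, G a -> G b -> G (a - b).

Lemma crossing_G : (forall L, L \in LL -> G (Psi L)) -> forall S, S \in TT -> G (Psi S).
Proof.
move=> HL S ST.
move: {2}#|[set L in LL | cr S L]| (leqnn #|[set L in LL | cr S L]|) => n.
elim: n S ST => [|n IH] S ST.
  rewrite leqn0 cards_eq0 => /eqP h0; apply: HL; apply: LL_max => // L HLL.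
  apply/negP => c; have : L \in [set L in LL | cr S L] by rewrite inE HLL c.
  by rewrite h0 inE.
move=> cn.
case: (boolP [exists L in LL, cr S L]); last first.
  rewrite negb_exists => /forallP h; apply: HL; apply: LL_max => // L HL'.
  by have := h L; rewrite HL'.
case/exists_inP => L HL' cSL.
have LT : L \in TT by apply: (subsetP LL_sub).
case: (unc ST LT cSL) => IT UT.
have key : forall X, X \in TT -> (forall M, M \in LL -> cr X M -> cr S M) -> ~~ cr X L ->
    G (Psi X).
  move=> X XT hX nXL; apply: IH => //.
  rewrite -ltnS; apply: leq_trans cn; apply: proper_card; rewrite properE; apply/andP; split.
    by apply/subsetP => M; rewrite !inE => /andP [HM cXM]; rewrite HM /=; apply: hX.
  apply/subsetP => /(_ L); rewrite !inE HL' cSL (negbTE nXL) /=; by move/(_ isT).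
have GI := key _ IT (fun M HM => cr_mono_I cSL (LL_free HL' HM)) (negbT (crI_sub S L)).
have GU := key _ UT (fun M HM => cr_mono_U cSL (LL_free HL' HM)) (negbT (crU_sub S L)).
have -> : Psi S = Psi (S :&: L) - (Psi L - Psi (S :|: L)).
  by rewrite opprB addrA -Psi_mod addrK.
apply: GB => //; apply: GB => //; exact: HL.
Qed.

End Uncross.
Section Graph.
Local Open Scope ring_scope.
Variable R : realType.
Variables V E : finType.
Variables t h : E -> V.

Definition sg (X : {set V}) e : R := (t e \in X)%:R - (h e \in X)%:R.
Definition Psi (c : E -> R) (X : {set V}) := \sum_e sg X e * c e.

Lemma Psi_modE c X Y : Psi c X + Psi c Y = Psi c (X :&: Y) + Psi c (X :|: Y).
Proof.
rewrite /Psi -!big_split /=; apply: eq_bigr => e _; rewrite -!mulrDl; congr (_ * _).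
rewrite /sg !inE.
case: (t e \in X); case: (t e \in Y); case: (h e \in X); case: (h e \in Y);
  rewrite /= ?mulr1n ?mulr0n; lra.
Qed.

Lemma Psi0E c : Psi c set0 = 0.
Proof. by rewrite /Psi big1 // => e _; rewrite /sg !inE subrr mul0r. Qed.

Lemma PsiTE c : Psi c setT = 0.
Proof. by rewrite /Psi big1 // => e _; rewrite /sg !inE subrr mul0r. Qed.

Definition crosses e (A : {set V}) := (t e \in A) != (h e \in A).

Lemma sg0 A e : ~~ crosses e A -> sg A e = 0.
Proof. by rewrite /crosses /sg negbK => /eqP ->; rewrite subrr. Qed.

Lemma card_sum (T : finType) (A : {set T}) (P : pred T) :
  #|[set x in A | P x]| = (\sum_(x in A) (P x : nat))%N.
Proof.
rewrite -sum1_card big_mkcond /= [RHS]big_mkcond /=; apply: eq_bigr => x _.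
by rewrite !inE; case: (x \in A); case: (P x).
Qed.

Variable MM : {set {set V}}.
Variable F : {set E}.
Definition AA := [set A in [set atom MM a | a in V] | [exists e in F, crosses e A]].

Lemma AA_atom A : A \in AA -> forall v, v \in A -> A = atom MM v.
Proof.
rewrite !inE => /andP [/imsetP [a _ ->] _] v va.
by rewrite (atom_eq va).
Qed.

Lemma card_AA_le : (forall A, A \in AA -> #|[set e in F | crosses e A]| != 1%N) ->
  (#|AA| <= #|F|)%N.
Proof.
move=> H1.
have lo : (#|AA| * 2 <= \sum_(A in AA) #|[set e in F | crosses e A]|)%N.
  rewrite -sum1_card big_distrl /=; apply: leq_sum => A HA; rewrite mul1n.
  have : (0 < #|[set e in F | crosses e A]|)%N.
    rewrite card_gt0; move: HA; rewrite !inE => /andP [_ /exists_inP [e eF ce]].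
    by apply/set0Pn; exists e; rewrite inE eF ce.
  by move: (H1 A HA); case: #|_| => [|[|n]].
have up : (\sum_(A in AA) #|[set e in F | crosses e A]| <= #|F| * 2)%N.
  under eq_bigr do rewrite card_sum.
  rewrite exchange_big /= -sum1_card big_distrl /=; apply: leq_sum => e eF.
  rewrite mul1n -card_sum.
  have sub : [set A in AA | crosses e A] \subset [set atom MM (t e); atom MM (h e)].
    apply/subsetP => A; rewrite inE => /andP [HA ce].
    rewrite !inE; move: ce; rewrite /crosses.
    case tA: (t e \in A); case hA: (h e \in A) => //= _.
      by rewrite (AA_atom HA tA) eqxx.
    by rewrite (AA_atom HA hA) eqxx orbT.
  apply: leq_trans (subset_leq_card sub) _; rewrite cards2.
  by case: (_ != _).
by rewrite -(leq_pmul2r (isT : (0 < 2)%N)); apply: leq_trans lo up.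
Qed.


Lemma sum_in_AA v : \sum_(A in AA) ((v \in A)%:R : R) = ((atom MM v \in AA)%:R : R).
Proof.
rewrite (eq_bigr (fun A => ((A == atom MM v)%:R : R))); last first.
  move=> A HA; suff -> : (v \in A) = (A == atom MM v) by [].
  apply/idP/eqP.
    by move=> vA; apply: AA_atom.
  by move=> ->; apply: atom_self.
case HA: (atom MM v \in AA).
  rewrite (bigD1 (atom MM v)) //= eqxx big1 ?addr0 // => A /andP [_ ne].
  by rewrite (negbTE ne).
apply: big1 => A HA'; case: (A =P atom MM v) => [eq|] //.
by rewrite eq HA in HA'.
Qed.

Lemma rowsum_AA e : e \in F -> \sum_(A in AA) sg A e = 0.
Proof.
move=> eF; rewrite /sg sumrB !sum_in_AA.
suff -> : (atom MM (t e) \in AA) = (atom MM (h e) \in AA) by rewrite subrr.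
case: (atom MM (t e) =P atom MM (h e)) => [-> //|ne].
have ht : h e \notin atom MM (t e).
  by apply/negP => /atom_eq eq; apply: ne; rewrite eq.
have th : t e \notin atom MM (h e).
  by apply/negP => /atom_eq eq; apply: ne.
rewrite !inE !imset_f //; apply/idP/idP => _; apply/exists_inP; exists e => //.
  by rewrite /crosses (negbTE th) atom_self.
by rewrite /crosses (negbTE ht) atom_self.
Qed.

Lemma kernel_exists (e0 : E) (e0F : e0 \in F) :
  (forall A, A \in AA -> #|[set e in F | crosses e A]| != 1%N) ->
  exists d : E -> R, (exists e, d e != 0) /\ (forall e, e \notin F -> d e = 0) /\
    (forall a, Psi d (atom MM a) = 0).
Proof.
move=> H1.
have km := card_AA_le H1.
pose M : 'M[R]_(#|F|, #|AA|) := \matrix_(i, j) sg (enum_val j) (enum_val i).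
have rk : (\rank M < #|F|)%N.
  case: (posnP #|AA|) => k0.
    have := rank_leq_col M; rewrite [X in (_ <= X)%N]k0 leqn0 => /eqP ->.
    by rewrite card_gt0; apply/set0Pn; exists e0.
  apply: (@leq_trans #|AA|); last exact: km.
  pose c : 'cV[R]_#|AA| := const_mx 1.
  have Mc : M *m c = 0.
    apply/matrixP => i j; rewrite !mxE.
    rewrite (eq_bigr (fun j => sg (enum_val j) (enum_val i))); last first.
      by move=> l _; rewrite !mxE mulr1.
    by rewrite -(big_enum_val (fun A => sg A (enum_val i))) rowsum_AA // enum_valP.
  have cnz : c^T != 0.
    apply/negP => /eqP /matrixP /(_ 0 (Ordinal k0)).
    by rewrite !mxE => /eqP; rewrite oner_eq0.
  have sub : (c^T <= kermx M^T)%MS.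
    by apply/sub_kermxP; rewrite -trmx_mul Mc trmx0.
  have := mxrankS sub; rewrite rank_rV cnz mxrank_ker mxrank_tr.
  by rewrite subn_gt0.
have kz : kermx M != 0.
  by rewrite -mxrank_eq0 mxrank_ker subn_eq0 -ltnNge.
have /existsP [[i j] /= Kij] : [exists ij : 'I_#|F| * 'I_#|F|, kermx M ij.1 ij.2 != 0].
  apply: contraR kz; rewrite negb_exists => /forallP hz.
  apply/eqP/matrixP => a b; have := hz (a, b); rewrite negbK => /eqP ->.
  by rewrite mxE.
pose v := row i (kermx M).
have vM : v *m M = 0 by rewrite -row_mul mulmx_ker row0.
pose d := fun e => if e \in F then v 0 (enum_rank_in e0F e) else 0.
exists d; split; [|split].
- exists (enum_val j); rewrite /d enum_valP enum_valK_in /v mxE //.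
- by move=> e; rewrite /d => /negbTE ->.
- move=> a; rewrite /Psi.
  rewrite (bigID (fun e => e \in F)) /= [X in _ + X]big1 ?addr0; last first.
    by move=> e /negbTE eF; rewrite /d eF mulr0.
  case HA: (atom MM a \in AA); last first.
    apply: big1 => e eF; rewrite sg0 ?mul0r //; apply: contraFN HA => ce.
    by rewrite !inE imset_f //=; apply/exists_inP; exists e.
  rewrite (big_enum_val (fun e => sg (atom MM a) e * d e)) /=.
  have vM0 := congr1 (fun B : 'rV[R]_#|AA| => B 0 (enum_rank_in HA (atom MM a))) vM.
  rewrite /= !mxE in vM0; rewrite -[RHS]vM0.
  apply: eq_bigr => l _; rewrite /d enum_valP enum_valK_in /M !mxE enum_rankK_in //.
  by rewrite mulrC.
Qed.

End Graph.
Section Poly.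
Local Open Scope ring_scope.
Variable R : realType.
Variables V E : finType.
Variable ends : E -> V * V.
Variable tau : nat.
Notation tl := (fun e : E => (ends e).1).
Notation hd := (fun e : E => (ends e).2).

Lemma sum_pair (G : E * bool -> R) : \sum_a G a = \sum_e (G (e, true) + G (e, false)).
Proof.
rewrite (eq_bigr (fun p => G (p.1, p.2))); last by case.
rewrite -(pair_bigA _ (fun e b => G (e, b))) /=.
by apply: eq_bigr => e _; rewrite big_bool.
Qed.

Lemma out_cut_decomp (x : E * bool -> R) U :
  out_cut ends x U = Psi tl hd (fun e => x (e, true)) U +
    \sum_e ((hd e \in U) && (tl e \notin U))%:R * (x (e, true) + x (e, false)).
Proof.
rewrite /out_cut big_mkcond /= sum_pair /Psi -big_split /=; apply: eq_bigr => e _.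
rewrite /arc_tail /arc_head /sg /=.
by case: ((ends e).1 \in U); case: ((ends e).2 \in U); rewrite /= ?mulr1n ?mulr0n; lra.
Qed.

Lemma out_cut_lin (x z : E * bool -> R) (s : R) U :
  out_cut ends (fun a => x a + s * z a) U = out_cut ends x U + s * out_cut ends z U.
Proof. by rewrite /out_cut big_split /= mulr_sumr. Qed.

Lemma submod (x : E * bool -> R) U W : (forall a, 0 <= x a) ->
  out_cut ends x (U :&: W) + out_cut ends x (U :|: W) <= out_cut ends x U + out_cut ends x W.
Proof.
move=> xnn; rewrite /out_cut !(big_mkcond (fun a => _ && _)) -!big_split /=.
apply: ler_sum => a _; have := xnn a; rewrite !inE.
case: (arc_tail ends a \in U); case: (arc_tail ends a \in W);
case: (arc_head ends a \in U); case: (arc_head ends a \in W) => /= h0; lra.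
Qed.

Lemma sg_int (X : {set V}) e : sg R tl hd X e \is a Num.int.
Proof. by rewrite /sg rpredB // natr_int. Qed.

Lemma exists_lb (I : finType) (P : pred I) (f : I -> R) :
  (forall i, P i -> 0 < f i) -> exists m, 0 < m /\ forall i, P i -> m <= f i.
Proof.
move=> hf; exists (\big[Order.min/1]_(i | P i) f i); split.
  by apply: lt_bigmin => //; apply: ltr01.
by move=> i Pi; apply: bigmin_le_cond.
Qed.

End Poly.
Section Main.
Local Open Scope ring_scope.
Variable R : realType.
Variables V E : finType.
Variable ends : E -> V * V.
Variable tau : nat.
Notation tl := (fun e : E => (ends e).1).
Notation hd := (fun e : E => (ends e).2).
Variable x : E * bool -> R.
Hypothesis hP : in_P1tau ends tau x.

Lemma xnn a : 0 <= x a.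
Proof.
case: hP => hE _; case: a => e []; case: (hE e) => [h1 [h2 _]]; lra.
Qed.

Lemma xf e : x (e, false) = tau%:R - x (e, true).
Proof. case: hP => hE _; case: (hE e) => [_ [_ h3]]; lra. Qed.

Definition tight U := [&& U != set0, U != setT & out_cut ends x U == tau%:R].
Definition TT := [set U | tight U].

Lemma unc_tight U W : U \in TT -> W \in TT -> cr U W -> (U :&: W \in TT) /\ (U :|: W \in TT).
Proof.
rewrite !inE => /and3P [U0 UT /eqP HU] /and3P [W0 WT /eqP HW].
case/and4P => /existsP [v1 /andP [v1U v1W]] /existsP [v2 /andP [v2U v2W]]
  /existsP [v3 /andP [v3U v3W]] /existsP [v4 /andP [v4U v4W]].
have I0 : U :&: W != set0 by apply/set0Pn; exists v1; rewrite inE v1U v1W.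
have IT : U :&: W != setT by apply/negP => /eqP/setP/(_ v3); rewrite !inE (negbTE v3U).
have U0' : U :|: W != set0 by apply/set0Pn; exists v1; rewrite inE v1U.
have UT' : U :|: W != setT by apply/negP => /eqP/setP/(_ v4); rewrite !inE (negbTE v4U) (negbTE v4W).
case: hP => _ hC.
have h1 := hC _ I0 IT; have h2 := hC _ U0' UT'.
have h3 := submod ends U W xnn.
rewrite /tight I0 IT U0' UT' /=; split; apply/eqP; lra.
Qed.

Definition Fs := [set e | x (e, true) \isn't a Num.int].
Definition yF e := if e \in Fs then x (e, true) else 0.

Lemma Psi_lin (c1 c2 : E -> R) U : Psi tl hd (fun e => c1 e + c2 e) U = Psi tl hd c1 U + Psi tl hd c2 U.
Proof. by rewrite /Psi -big_split /=; apply: eq_bigr => e _; rewrite mulrDr. Qed.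

Lemma Psi_yF_int U : U \in TT -> Psi tl hd yF U \is a Num.int.
Proof.
rewrite inE => /and3P [_ _ /eqP HU].
move: HU; rewrite out_cut_decomp.
have -> : (fun e => x (e, true)) = (fun e => yF e + (x (e, true) - yF e)).
  by apply: boolp.funext => e; rewrite addrC subrK.
rewrite Psi_lin => HU.
have -> : Psi tl hd yF U = tau%:R - \sum_e ((hd e \in U) && (tl e \notin U))%:R * (x (e, true) + x (e, false))
   - Psi tl hd (fun e => x (e, true) - yF e) U by rewrite -HU; lra.
apply: rpredB; first apply: rpredB.
- exact: natr_int.
- apply: rpred_sum => e _; apply: rpredM; first exact: natr_int.
  by rewrite xf addrC subrK natr_int.
- apply: rpred_sum => e _; apply: rpredM; first exact: sg_int.
  rewrite /yF inE; case: ifP => [_|/negbFE h]; first by rewrite subrr rpred0.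
  by rewrite subr0.
Qed.

Hypothesis hV : is_vertex (in_P1tau ends tau) x.

Lemma no_direction (d : E -> R) : (exists e, d e != 0) -> (forall e, e \notin Fs -> d e = 0) ->
  (forall U, U \in TT -> Psi tl hd d U = 0) -> False.
Proof.
move=> [e1 de1] dF dT.
pose D := fun a : E * bool => if a.2 then d a.1 else - d a.1.
have outD U : out_cut ends D U = Psi tl hd d U.
  rewrite out_cut_decomp big1 ?addr0 // => e _; rewrite /D /= subrr mulr0 //.
pose K := 1 + \sum_e `|d e|.
have Sge0 : 0 <= \sum_e `|d e| by apply: sumr_ge0 => e _.
have K0 : 0 < K by rewrite /K; lra.
have dK e : `|d e| <= K.
  rewrite /K (bigD1 e) //=.
  have : 0 <= \sum_(i | i != e) `|d i| by apply: sumr_ge0.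
  lra.
have PK U : `|Psi tl hd d U| <= K.
  apply: le_trans (ler_norm_sum _ _ _) _.
  apply: (@le_trans _ _ (\sum_e `|d e|)); last by rewrite /K; lra.
  apply: ler_sum => e _; rewrite normrM /sg.
  case: ((ends e).1 \in U); case: ((ends e).2 \in U);
    rewrite /= ?mulr1n ?mulr0n ?subrr ?subr0 ?sub0r ?normr0 ?normrN ?normr1 ?mul0r ?mul1r //.
case: hP => hE hC.
have gt1 e : e \in Fs -> 1 < x (e, true) /\ 1 < x (e, false).
  rewrite inE => nI; case: (hE e) => [h1 [h2 h3]]; split.
    rewrite lt_neqAle h1 andbT; apply: contraNneq nI => <-; exact: rpred1.
  rewrite lt_neqAle h2 andbT; apply: contraNneq nI => h4.
  have -> : x (e, true) = tau%:R - 1 by lra.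
  by rewrite rpredB ?natr_int ?rpred1.
have [m1 [m10 Hm1]] := @exists_lb R _ (fun e => e \in Fs) (fun e => x (e, true) - 1)
  (fun e eF => ltac:(have := gt1 e eF; lra)).
have [m2 [m20 Hm2]] := @exists_lb R _ (fun e => e \in Fs) (fun e => x (e, false) - 1)
  (fun e eF => ltac:(have := gt1 e eF; lra)).
have [m3 [m30 Hm3]] := @exists_lb R _
  (fun U : {set V} => [&& U != set0, U != setT & out_cut ends x U != tau%:R])
  (fun U => out_cut ends x U - tau%:R)
  (fun U HU => ltac:(case/and3P: HU => [h1 h2 h3]; have := hC U h1 h2;
     rewrite le_eqVlt eq_sym (negbTE h3) /=; lra)).
pose m := Order.min m1 (Order.min m2 m3).
have [mm1 mm2 mm3] : [/\ m <= m1, m <= m2 & m <= m3].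
  by have := lexx m; rewrite {2}/m !le_min => /and3P.
have m0 : 0 < m by rewrite /m !lt_min m10 m20 m30.
pose eps := m / K.
have eps0 : 0 < eps by rewrite divr_gt0.
have epsK : eps * K = m by rewrite /eps divfK // gt_eqF.
have bnd s z : `|s| <= eps -> `|z| <= K -> `|s * z| <= m.
  move=> hs hz; rewrite normrM -epsK; apply: ler_pM => //.
have feas s : `|s| <= eps -> in_P1tau ends tau (fun a => x a + s * D a).
  move=> hs; split.
    move=> e; rewrite /D /=.
    case eF: (e \in Fs); last first.
      rewrite dF ?eF // mulr0 oppr0 mulr0 !addr0; exact: hE.
    have := bnd s (d e) hs (dK e); case/ler_normlP => b1 b2.
    have := Hm1 e eF; have := Hm2 e eF; case: (hE e) => [_ [_ h3]].
    rewrite mulrN; split; [lra | split; lra].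
  move=> U U0 UT; rewrite out_cut_lin outD.
  have := bnd s (Psi tl hd d U) hs (PK U); case/ler_normlP => b1 b2.
  case tU: (out_cut ends x U == tau%:R).
    by rewrite dT ?mulr0 ?addr0 ?(eqP tU) // inE /tight U0 UT tU.
  have := Hm3 U; rewrite U0 UT tU => /(_ isT); lra.
case: hV => _ /(_ (fun a => x a + eps * D a) (fun a => x a + (- eps) * D a) (2^-1)).
move=> /(_ (feas eps _) (feas (- eps) _)).
rewrite normrN gtr0_norm // lexx => /(_ isT isT).
have h2 : (0 : R) < 2^-1 by rewrite invr_gt0; lra.
have h2' : (2^-1 : R) < 1 by rewrite invf_lt1; lra.
move=> /(_ h2 h2').
have hx : x = (fun a => 2^-1 * (x a + eps * D a) + (1 - 2^-1) * (x a + - eps * D a)).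
  apply: boolp.funext => a /=.
  set u := eps * D a; rewrite mulNr -/u; lra.
move=> /(_ hx) /(congr1 (fun f => f (e1, true))) /= heq.
have : eps * d e1 = 0.
  have : 2 * (eps * d e1) = 0 by move: heq; rewrite /D /=; lra.
  by move/eqP; rewrite mulf_eq0 pnatr_eq0 /= => /eqP.
by move/eqP; rewrite mulf_eq0 (negbTE de1) orbF gt_eqF.
Qed.

End Main.
Local Open Scope ring_scope.
Theorem mainTheorem15 (R : realType) (V E : finType) (ends : E -> V * V)
  (loopless : forall e : E, (ends e).1 != (ends e).2)
  (tau : nat) (tau_pos : (0 < tau)%N) :
  forall x : E * bool -> R,
    is_vertex (in_P1tau ends tau) x -> integral_vector x.
Proof.
move=> x hV; have hP := hV.1.
move=> [e b]; case: (boolP (x (e, b) \is a Num.int)) => // nI; exfalso.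
pose tl := fun e : E => (ends e).1.
pose hd := fun e : E => (ends e).2.
have eF : e \in Fs x.
  rewrite inE; case: b nI => // nI; apply: contra nI => yI.
  by rewrite (xf hP) rpredB ?natr_int.
pose T := TT ends tau x.
have unc := @unc_tight R V E ends tau x hP.
pose L0 := LL T.
pose r := tl e.
pose MM := [set nrm r L | L in L0].
have Gint : forall a b : R, a \is a Num.int -> b \is a Num.int -> a - b \is a Num.int.
  by move=> a1 b1 h1 h2; rewrite rpredB.
have LT : forall L, L \in L0 -> L \in T by move=> L; apply: (subsetP (LL_sub T)).
have atomI : forall a, Psi tl hd (yF x) (atom L0 a) \is a Num.int.
  move=> a; rewrite -(atom_nrm r).
  apply: (@atoms_G R V (Psi tl hd (yF x)) (Psi_modE tl hd (yF x)) (Psi0E tl hd (yF x))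
    (fun z => z \is a Num.int) Gint #|MM| MM (leqnn _)).
  - move=> A B /imsetP [L HL ->] /imsetP [L' HL' ->]; apply: nrm_lam.
    exact: (LL_free HL HL').
  - move=> A /imsetP [L HL ->]; rewrite /nrm; case: ifP => _.
      rewrite (Psi_C (Psi_modE tl hd (yF x)) (Psi0E tl hd (yF x))) PsiTE sub0r rpredN.
      exact: (Psi_yF_int hP (LT L HL)).
    exact: (Psi_yF_int hP (LT L HL)).
  - by rewrite PsiTE rpred0.
case: (boolP [exists A in AA tl hd L0 (Fs x), #|[set e in Fs x | crosses tl hd e A]| == 1%N]).
  case/exists_inP => A HA /cards1P [e0 He0].
  have e0in : e0 \in [set e in Fs x | crosses tl hd e A] by rewrite He0 inE.
  move: e0in; rewrite inE => /andP [e0F ce0].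
  have [a Aa] : exists a, A = atom L0 a.
    by move: HA; rewrite !inE => /andP [/imsetP [a _ ->] _]; exists a.
  have := atomI a; rewrite -Aa /Psi (bigD1 e0) //= big1 ?addr0; last first.
    move=> e' ne'; rewrite /yF; case: ifP => e'F; last by rewrite mulr0.
    rewrite sg0 ?mul0r //; apply/negP => ce'.
    have : e' \in [set e in Fs x | crosses tl hd e A] by rewrite inE e'F ce'.
    by rewrite He0 inE (negbTE ne').
  rewrite /yF e0F; move: ce0; rewrite /crosses /sg.
  case: (tl e0 \in A); case: (hd e0 \in A) => //= _;
    rewrite ?mulr1n ?mulr0n ?subr0 ?sub0r ?mul1r ?mulN1r ?rpredN => h.
    by move: e0F; rewrite inE h.
  by move: e0F; rewrite inE h.
rewrite negb_exists_in => /forall_inP H1.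
have [d [dnz [dF dA]]] := @kernel_exists R V E tl hd L0 (Fs x) e eF H1.
apply: (no_direction hP hV dnz dF).
have Gz : forall a b : R, a == 0 -> b == 0 -> a - b == 0.
  by move=> a1 b1 /eqP -> /eqP ->; rewrite subrr.
move=> U HU; apply/eqP.
apply: (@crossing_G R V T unc (Psi tl hd d) (Psi_modE tl hd d) (fun z => z == 0) Gz) => //.
move=> L HL; apply/eqP; apply: (union_atoms (Psi_modE tl hd d) (Psi0E tl hd d)) => //.
move=> a' v aL; rewrite inE => /forall_inP /(_ L HL) /eqP ->; exact: aL.
Qed.
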